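(* Let $\alpha\in(0,1]$, $r\in\mathbb{N}$, $\gamma=\alpha/(4\alpha+4d)$, $\mathcal{D}$ a dyadic grid, and let $S',R\in\mathcal{D}$ with $S'\subset R$ and $S'$ $r$-good. Let $x\in S'$, $t\in(\ell R/2,\ell R)$, and let $Q\in\mathcal{D}$ with $Q\supset S'$. Then there exists $\eta>0$ (depending only on $\alpha,d$) such that \[ K_t^{S'}\mathbf{1}_{\mathbb{R}^d\setminus Q}(x)\lesssim\left(\frac{\ell S'}{\max(\ell R^{(r)},\ell Q)}\right)^\eta,\qquad K_t^{S'}\mathbf{1}_Q(x)\lesssim\frac{|Q|}{|R|}\left(\frac{\ell S'}{\ell R}\right)^{\alpha/2}, \] with implicit constants depending only on $\alpha,d,r$.
   Context: $\mathbb{R}^d$ carries the $\ell^\infty$ metric. A dyadic grid is the standard grid $\mathcal{D}^0=\bigcup_j\{2^{-j}([0,1)^d+m):m\in\mathbb{Z}^d\}$ or a translate $\mathcal{D}^\omega=\{R+\sum_{i>j}\omega_i2^{-i}:R\in\mathcal{D}^0,\ \ell R=2^{-j}\}$. $R^{(r)}$ is the $r$-th dyadic ancestor of $R$. A cube $S'\in\mathcal{D}$ is $r$-good if $\operatorname{d}(S',\partial P)>(\ell S')^\gamma(\ell P)^{1-\gamma}$ for every $P\in\mathcal{D}$ with $\ell P\ge2^r\ell S'$. With $x_{S'}$ the centre of $S'$, \[K_t^{S'}f(x)=\int_{\mathbb{R}^d}\frac{(t|x-x_{S'}|)^{\alpha/2}}{(t+|x-y|)^{\alpha+d}}|f(y)|\,\mathrm{d}y.\]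 *)

(* Defs.v *)
From HB Require Import structures.
From mathcomp Require Import all_boot all_order all_algebra.
From mathcomp Require Import all_classical all_reals all_analysis.
Import Order.TTheory GRing.Theory Num.Theory.
Import numFieldNormedType.Exports.
Local Open Scope classical_set_scope.
Local Open Scope ring_scope.

(* Points of R^d are row vectors 'rV[R]_d; their canonical norm `|x| is the
   max (l^infty) norm mx_norm, so the metric is the l^infty metric. *)

(* Lebesgue integral on R^d of a nonnegative \bar R-valued function, written
   out as the iterated (Tonelli) integral of one-dimensional Lebesgue
   integrals, coordinate by coordinate. *)
Fixpoint int_Rd (R : realType) (n : nat) : ('rV[R]_n -> \bar R) -> \bar R :=
  match n return ('rV[R]_n -> \bar R) -> \bar R with
  | 0 => fun f => f 0
  | n'.+1 => fun f =>
      (\int[@lebesgue_measure R]_(s in [set: R])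
         int_Rd R n' (fun v => f (row_mx (\row_(_ < 1) s) v)))%E
  end.

(* A dyadic grid is given by omega = (omega_i)_{i in Z}, omega_i in {0,1}^d;
   omega = 0 gives the standard grid D^0. *)
Definition grid_param (d : nat) := int -> 'I_d -> bool.

Definition dshift (R : realType) (d : nat) (w : grid_param d) (j : int)
    : 'rV[R]_d :=
  \row_(c < d) limn (series (fun k : nat =>
      (w (j + (k.+1)%:Z) c)%:R * (2%:R : R) ^ (- (j + (k.+1)%:Z)))).

(* A dyadic cube of D^omega is encoded by its generation j (side 2^{-j})
   and its integer position m in Z^d. *)
Record dcube (d : nat) := DCube { dgen : int; dpos : 'I_d -> int }.

Definition side (R : realType) (d : nat) (P : dcube d) : R :=
  (2%:R : R) ^ (- dgen d P).

Definition cube_set (R : realType) (d : nat) (w : grid_param d) (P : dcube d)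
    : set 'rV[R]_d :=
  [set x | forall c : 'I_d,
      side R d P * (dpos d P c)%:~R + dshift R d w (dgen d P) 0 c <= x 0 c /\
      x 0 c < side R d P * ((dpos d P c)%:~R + 1) + dshift R d w (dgen d P) 0 c].

Definition centre (R : realType) (d : nat) (w : grid_param d) (P : dcube d)
    : 'rV[R]_d :=
  \row_(c < d) (side R d P * ((dpos d P c)%:~R + 2^-1) + dshift R d w (dgen d P) 0 c).

Definition boundary (R : realType) (d : nat) (A : set 'rV[R]_d) :=
  closure A `\` interior A.

(* l^infty distance between two sets, in \bar R (inf of the empty set = +oo) *)
Definition set_dist (R : realType) (d : nat) (A B : set 'rV[R]_d) : \bar R :=
  ereal_inf [set (`|x - y|)%:E | x in A & y in B].

Definition good (R : realType) (d : nat) (w : grid_param d) (gamma : R)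
    (r : nat) (S : dcube d) : Prop :=
  forall P : dcube d, (2%:R : R) ^+ r * side R d S <= side R d P ->
    ((side R d S `^ gamma * side R d P `^ (1 - gamma))%:E <
       set_dist R d (cube_set R d w S) (boundary R d (cube_set R d w P)))%E.

Definition Kop (R : realType) (d : nat) (w : grid_param d) (alpha t : R)
    (S : dcube d) (f : 'rV[R]_d -> R) (x : 'rV[R]_d) : \bar R :=
  int_Rd R d (fun y : 'rV[R]_d =>
    ((t * `|x - centre R d w S|) `^ (alpha / 2%:R)
      / (t + `|x - y|) `^ (alpha + d%:R) * `|f y|)%:E).

(* Main.v *)
Require Import Defs.
From HB Require Import structures.
From mathcomp Require Import all_boot all_order all_algebra.
From mathcomp Require Import all_classical all_reals all_analysis.
Import Order.TTheory GRing.Theory Num.Theory.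
Import numFieldNormedType.Exports.
Local Open Scope classical_set_scope.
Local Open Scope ring_scope.
Import mathcomp.analysis.measurable_realfun.
From mathcomp Require Import ring lra.
Section SA.
Variable R : realType.
Local Notation mu := (@lebesgue_measure R).

Lemma le_intT (f g : R -> \bar R) : (forall x, (0 <= f x)%E) -> (forall x, (f x <= g x)%E) ->
  (\int[mu]_(s in [set: R]) f s <= \int[mu]_(s in [set: R]) g s)%E.
Proof.
move=> f0 fg.
have g0 x : (0 <= g x)%E by apply: le_trans (f0 x) (fg x).
rewrite !ge0_integralTE//.
apply: le_ereal_sup => _ [h hf <-]; exists h => //= x.
exact: le_trans (hf x) (fg x).
Qed.

Lemma int_Rd_ge0 n (f : 'rV[R]_n -> \bar R) : (forall x, (0 <= f x)%E) -> (0 <= int_Rd R n f)%E.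
Proof.
elim: n f => [|n IH] f f0 /=; first exact: f0.
apply: integral_ge0 => s _; apply: IH => v; exact: f0.
Qed.

Lemma int_Rd_le n (f g : 'rV[R]_n -> \bar R) : (forall x, (0 <= f x)%E) -> (forall x, (f x <= g x)%E) ->
  (int_Rd R n f <= int_Rd R n g)%E.
Proof.
elim: n f g => [|n IH] f g f0 fg /=; first exact: fg.
apply: le_intT => s; first by apply: int_Rd_ge0.
by apply: IH.
Qed.

Lemma int_Rd_prod n (g : 'I_n -> R -> R) (k : R) : 0 <= k ->
  (forall c s, 0 <= g c s) -> (forall c, measurable_fun setT (g c)) ->
  int_Rd R n (fun y => (k * \prod_(c < n) g c (y 0 c))%:E) =
  (k%:E * \prod_(c < n) \int[mu]_(s in [set: R]) (g c s)%:E)%E.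
Proof.
elim: n g k => [|n IH] g k k0 g0 mg /=.
  by rewrite !big_ord0 mulr1 mule1.
have -> : (fun s => int_Rd R n (fun v : 'rV_n => (k * \prod_(c < n.+1) g c (row_mx (\row_(_ < 1) s) v 0 c))%:E))
   = (fun s => int_Rd R n (fun v : 'rV_n => ((k * g ord0 s) * \prod_(c < n) g (lift ord0 c) (v 0 c))%:E)).
  apply/funext => s; congr (int_Rd R n _); apply/funext => v.
  rewrite big_ord_recl mulrA; congr ((k * _ * _)%:E).
    have -> : (ord0 : 'I_n.+1) = lshift n (ord0 : 'I_1) by apply: val_inj.
    by rewrite row_mxEl mxE.
  apply: eq_bigr => c _.
  have -> : lift ord0 c = rshift 1 c by apply: val_inj.
  by rewrite row_mxEr.
have -> : (fun s => int_Rd R n (fun v : 'rV_n => ((k * g ord0 s) * \prod_(c < n) g (lift ord0 c) (v 0 c))%:E))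
   = (fun s => ((k * g ord0 s)%:E * \prod_(c < n) \int[mu]_(s in [set: R]) (g (lift ord0 c) s)%:E)%E).
  apply/funext => s; apply: IH => //; first exact: mulr_ge0.
rewrite ge0_integralZr//; last 3 first.
- apply/measurable_realfun.measurable_EFinP; exact: (measurable_realfun.measurable_funM (measurable_cst k) (mg ord0)).
- by move=> s _; rewrite lee_fin mulr_ge0.
- by apply: prode_ge0 => c _; apply: integral_ge0 => s _; rewrite lee_fin.
rewrite big_ord_recl muleA; congr (_ * _)%E.
under eq_integral do rewrite EFinM.
apply: ge0_integralZl => //.
- by apply/measurable_realfun.measurable_EFinP; exact: mg.
by move=> s _; rewrite lee_fin.
Qed.
End SA.
Section SB.
Variable R : realType.
Local Notation mu := (@lebesgue_measure R).

Lemma sh_derivable (p e x : R) : 0 < x + e -> derivable (fun s => (s + e) `^ p) x 1.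
Proof.
move=> xe.
have -> : (fun s => (s + e) `^ p) = (@powR R ^~ p) \o (fun s => s + e) by [].
apply/derivable1_diffP; apply: differentiable_comp.
  apply/derivable1_diffP; apply: derivableD => //; exact: derivable_cst.
apply/derivable1_diffP; apply: derivable_powR; by rewrite in_itv /= andbT.
Qed.

Lemma sh_derive1 (p e x : R) : 0 < x + e ->
  (fun s => (s + e) `^ p)^`()%classic x = p * (x + e) `^ (p - 1).
Proof.
move=> xe.
have -> : (fun s => (s + e) `^ p) = (@powR R ^~ p) \o (fun s => s + e) by [].
rewrite derive1_comp; last 2 first.
- exact: derivableD.
- apply: derivable_powR; by rewrite in_itv /= andbT.
rewrite powR_derive1 ?in_itv /= ?andbT //.
rewrite derive1E deriveD //.
by rewrite derive_id derive_cst addr0 mulr1.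
Qed.

Lemma sh_cont (p e x : R) : 0 < x + e -> {for x, continuous (fun s => (s + e) `^ p)}.
Proof.
move=> xe; apply: differentiable_continuous; apply/derivable1_diffP; exact: sh_derivable.
Qed.

Lemma powR_cvgy (e q : R) : q < 0 -> (x + e) `^ q @[x --> +oo] --> 0.
Proof.
move=> q0; apply/cvgrPdist_lt => eps eps0.
exists (expR (ln eps / q) - e); split; first exact: num_real.
move=> x Mx.
have xe : expR (ln eps / q) < x + e by rewrite -ltrBlDr.
have xe0 : 0 < x + e by apply: lt_trans xe; exact: expR_gt0.
rewrite sub0r normrN ger0_norm ?powR_ge0 // /powR gt_eqF //.
rewrite -[ltRHS]lnK ?posrE // ltr_expR.
have : ln eps / q < ln (x + e).
  by rewrite -[ltLHS]expRK ltr_ln ?posrE ?expR_gt0.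
rewrite ltr_ndivrMr // => h.
by rewrite mulrC.
Qed.

Lemma ftc_pow (b e beta : R) : 0 < b + e -> 1 < beta ->
  (\int[mu]_(s in `[b, +oo[) ((s + e) `^ (- beta))%:E = ((b + e) `^ (1 - beta) / (beta - 1))%:E)%E.
Proof.
move=> be b1.
have b10 : 0 < beta - 1 by rewrite subr_gt0.
pose F := fun s : R => - ((s + e) `^ (1 - beta)) / (beta - 1).
have FE : F = (fun s => (- (beta - 1)^-1) * (s + e) `^ (1 - beta)).
  by apply/funext => s; rewrite /F mulNr mulrC mulNr.
have pos x : b <= x -> 0 < x + e by move=> bx; apply: lt_le_trans be _; rewrite lerD2r.
rewrite (@ge0_continuous_FTC2y _ _ F b 0).
- by rewrite sub0e /F -EFinN mulNr opprK.
- by move=> x _; exact: powR_ge0.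
- apply: continuous_in_subspaceT => x; rewrite inE /= in_itv /= andbT => bx.
  exact: sh_cont (pos _ bx).
- rewrite FE -[0](mulr0 (- (beta - 1)^-1)).
  apply: cvgMr; apply: powR_cvgy; by rewrite subr_lt0.
- move=> x bx; rewrite FE; apply: derivableM; first exact: derivable_cst.
  exact: sh_derivable (pos _ (ltW bx)).
- apply: cvg_at_right_filter; rewrite FE; apply: cvgMr.
  exact: sh_cont (pos _ (lexx b)).
- move=> x; rewrite in_itv /= andbT => bx.
  rewrite FE derive1E deriveM //; last exact: sh_derivable (pos _ (ltW bx)).
  rewrite derive_cst scaler0 addr0 -derive1E sh_derive1; last exact: pos _ (ltW bx).
  rewrite /GRing.scale /= mulrA mulNr -mulrN opprB mulVf ?gt_eqF // mul1r.
  by congr (_ `^ _); rewrite addrAC subrr add0r.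
Qed.

Lemma powR_cont (p y : R) : 0 < y -> {for y, continuous (@powR R ^~ p)}.
Proof.
move=> y0; apply: differentiable_continuous; apply/derivable1_diffP.
apply: derivable_powR; by rewrite in_itv /= andbT.
Qed.

Lemma kern_cont (t a beta : R) : 0 < t -> continuous (fun s : R => (t + `|s - a|) `^ (- beta)).
Proof.
move=> t0 x.
have -> : (fun s : R => (t + `|s - a|) `^ (- beta)) = (@powR R ^~ (- beta)) \o (fun s => t + `|s - a|) by [].
apply: continuous_comp; last first.
  apply: powR_cont; apply: lt_le_trans t0 _; rewrite lerDl //.
apply: continuousD; first exact: cst_continuous.
apply: continuous_comp; last exact: norm_continuous.
apply: continuousB; [exact: cvg_id | exact: cst_continuous].
Qed.

Lemma int_kernel (t a beta : R) : 0 < t -> 1 < beta ->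
  (\int[mu]_(s in [set: R]) ((t + `|s - a|) `^ (- beta))%:E = ((2 / (beta - 1)) * t `^ (1 - beta))%:E)%E.
Proof.
move=> t0 b1.
set f := fun s : R => (t + `|s - a|) `^ (- beta).
have cf : continuous f by exact: kern_cont.
have mf : measurable_fun setT f by exact: continuous_measurable_fun.
have -> : [set: R] = `]-oo, a[ `|` `[a, +oo[.
  apply/seteqP; split => // x _ /=; rewrite !in_itv /= andbT.
  by case: (ltP x a) => xa; [left|right].
rewrite ge0_integral_setU //=; last 3 first.
- apply/measurable_realfun.measurable_EFinP; exact: measurable_funTS.
- by move=> x _; rewrite lee_fin powR_ge0.
- apply/disj_setPS => x [] /=; rewrite !in_itv /= andbT => xa ax.
  by move: (lt_le_trans xa ax); rewrite ltxx.
have HB : (\int[mu]_(s in `[a, +oo[) (f s)%:E = (t `^ (1 - beta) / (beta - 1))%:E)%E.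
  rewrite [in RHS](_ : t = a + (t - a)); last by rewrite addrC subrK.
  rewrite -(ftc_pow _ _ _ _ b1); last by rewrite addrC subrK.
  apply: eq_integral => s; rewrite inE /= in_itv /= andbT => as0.
  rewrite /f ger0_norm ?subr_ge0 //; congr (_ `^ _)%:E.
  by rewrite addrCA.
have HA : (\int[mu]_(s in `]-oo, a[) (f s)%:E = (t `^ (1 - beta) / (beta - 1))%:E)%E.
  rewrite integral_itv_bndo_bndc; last first.
    apply/measurable_realfun.measurable_EFinP; exact: measurable_funTS.
  have := @ge0_integration_by_substitutionNy R f (- a).
  rewrite opprK => ->; last 2 first.
  - exact: continuous_subspaceT.
  - by move=> x _; rewrite /f powR_ge0.
  rewrite [in RHS](_ : t = - a + (t + a)); last by rewrite addrCA addNr addr0.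
  rewrite -(ftc_pow _ _ _ _ b1); last by rewrite addrCA addNr addr0.
  apply: eq_integral => s; rewrite inE /= in_itv /= andbT => as0.
  rewrite /f /= -opprD normrN ger0_norm; last by rewrite -lerBlDr sub0r.
  by rewrite addrCA.
rewrite HA HB -EFinD; congr EFin.
by ring.
Qed.

Lemma int_indic_itv (a b : R) : a <= b ->
  (\int[mu]_(s in [set: R]) (\1_(`[a, b[ : set R) s)%:E = (b - a)%:E)%E.
Proof.
move=> ab; rewrite integral_indic //= setIT lebesgue_measure_itv /=.
case: ltP => [_|]; first by rewrite EFinB.
rewrite lee_fin => ba.
have -> : b = a by apply/eqP; rewrite eq_le ab ba.
by rewrite subrr.
Qed.
End SB.
Section G.
Variable R : realType.
Variable d : nat.
Implicit Types (w : grid_param d) (P : dcube d).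

Definition lo w P (c : 'I_d) : R := side R d P * (dpos d P c)%:~R + dshift R d w (dgen d P) 0 c.

Lemma side_gt0 P : 0 < side R d P.
Proof. by apply: exprz_gt0; rewrite ltr0n. Qed.

Lemma cube_setE w P (x : 'rV[R]_d) :
  cube_set R d w P x <-> forall c, lo w P c <= x 0 c < lo w P c + side R d P.
Proof.
rewrite /cube_set /lo /=; split => h c.
  have [h1 h2] := h c.
  by rewrite h1 /=; move: h2; rewrite mulrDr mulr1 addrAC.
have /andP[h1 h2] := h c.
by split => //; rewrite mulrDr mulr1 addrAC.
Qed.

Definition upd (x : 'rV[R]_d) (c : 'I_d) (u : R) : 'rV[R]_d :=
  \row_j (if j == c then u else x 0 j).

Lemma updE x c u j : upd x c u 0 j = if j == c then u else x 0 j.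
Proof. by rewrite mxE. Qed.

Lemma coord_le_norm (v : 'rV[R]_d) j : `|v 0 j| <= `|v|.
Proof.
rewrite [leRHS]/Num.Def.normr /= mx_normrE; apply/bigmax_geP; right => /=.
by exists (0, j).
Qed.

Lemma norm_le (v : 'rV[R]_d) b : 0 <= b -> (forall j, `|v 0 j| <= b) -> `|v| <= b.
Proof.
move=> b0 h; rewrite [leLHS]/Num.Def.normr /= mx_normrE.
apply: bigmax_le => //= -[i j] _.
by rewrite (ord1 i); exact: h.
Qed.

Lemma norm_upd_sub x c u : `|x - upd x c u| <= `|x 0 c - u|.
Proof.
apply: norm_le => // j; rewrite !mxE.
by case: eqP => [jc|_]; rewrite ?jc ?subrr ?normr0.
Qed.

Lemma norm_upd_upd x c u v : `|upd x c u - upd x c v| <= `|u - v|.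
Proof.
apply: norm_le => // j; rewrite !mxE.
by case: eqP => [jc|_]; rewrite ?jc ?subrr ?normr0.
Qed.

Lemma upd_in w P x c u : cube_set R d w P x -> lo w P c <= u < lo w P c + side R d P ->
  cube_set R d w P (upd x c u).
Proof.
move=> /cube_setE hx hu; apply/cube_setE => j; rewrite updE.
by case: eqP => [->|_]; [exact: hu | exact: hx].
Qed.

Lemma upd_notin w P x c u : ~~ (lo w P c <= u < lo w P c + side R d P) ->
  ~ cube_set R d w P (upd x c u).
Proof.
move=> hu /cube_setE /(_ c); rewrite updE eqxx => h.
by rewrite h in hu.
Qed.

Lemma side_le w S P x : (0 < d)%N -> cube_set R d w S x ->
  cube_set R d w S `<=` cube_set R d w P -> side R d S <= side R d P.
Proof.
move=> d0 xS SP; pose c := Ordinal d0.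
have key u : lo w S c <= u < lo w S c + side R d S -> lo w P c <= u < lo w P c + side R d P.
  move=> hu; have := SP _ (@upd_in w S x c u xS hu); move/cube_setE/(_ c).
  by rewrite updE eqxx.
have sS := side_gt0 S.
have /andP[h1 h2] := key (lo w S c) ltac:(by rewrite lexx /= ltrDl).
rewrite leNgt; apply/negP => hlt.
have H : lo w S c <= lo w P c + side R d P < lo w S c + side R d S.
  by apply/andP; split; [apply: ltW|lra].
by have := key _ H; rewrite ltxx andbF.
Qed.

Lemma ballP (z z' : 'rV[R]_d) e : `|z - z'| < e -> ball z e z'.
Proof. by rewrite -ball_normE /ball_ /=. Qed.

Lemma bdry_near w P x y : cube_set R d w P x -> ~ cube_set R d w P y ->
  exists z, boundary R d (cube_set R d w P) z /\ `|x - z| <= `|x - y|.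
Proof.
move=> xP yP.
have [c hc] : exists c, ~~ (lo w P c <= y 0 c < lo w P c + side R d P).
  case: (pselect (exists c, ~~ (lo w P c <= y 0 c < lo w P c + side R d P))) => [//|H].
  exfalso; apply: yP; apply/cube_setE => c; apply/negPn/negP => h; apply: H.
  by exists c.
have /cube_setE /(_ c) /andP [xc1 xc2] := xP.
have sP := side_gt0 P.
have dxy : `|x 0 c - y 0 c| <= `|x - y|.
  by have := coord_le_norm (x - y) c; rewrite !mxE.
move: hc; rewrite negb_and -ltNge -leNgt => /orP [h|h].
- exists (upd x c (lo w P c)); split; last first.
    apply: le_trans (norm_upd_sub _ _ _) _; apply: le_trans dxy.
    rewrite !ger0_norm; lra.
  split.
    apply: subset_closure; apply: upd_in => //; apply/andP; split; lra.
  move=> /nbhs_ballP [e /= e0 he].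
  have := he (upd x c (lo w P c - e / 2)).
  have : ball (upd x c (lo w P c)) e (upd x c (lo w P c - e / 2)).
    apply: ballP; apply: le_lt_trans (norm_upd_upd _ _ _ _) _.
    have -> : lo w P c - (lo w P c - e / 2) = e / 2 by ring.
    rewrite ger0_norm; lra.
  move=> /[swap] /[apply]; apply: upd_notin.
  by rewrite negb_and -ltNge; apply/orP; left; lra.
- exists (upd x c (lo w P c + side R d P)); split; last first.
    apply: le_trans (norm_upd_sub _ _ _) _; apply: le_trans dxy.
    rewrite ler0_norm ?ltr0_norm; lra.
  split; last first.
    move/interior_subset; apply: upd_notin.
    by rewrite ltxx andbF.
  move=> B /nbhs_ballP [e /= e0 he].
  have [del [del0 [dele dels]]] : exists del, 0 < del /\ del < e /\ del <= side R d P.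
    case: (leP e (side R d P)) => h'; [exists (e / 2) | exists (side R d P / 2)]; split; try split; lra.
  exists (upd x c (lo w P c + side R d P - del)); split.
    apply: upd_in => //; apply/andP; split; lra.
  apply: he; apply: ballP; apply: le_lt_trans (norm_upd_upd _ _ _ _) _.
  have -> : lo w P c + side R d P - (lo w P c + side R d P - del) = del by ring.
  rewrite ger0_norm; lra.
Qed.
End G.
Section D.
Variable R : realType.
Variable d : nat.

Lemma powRE (a p : R) : 0 < a -> a `^ p = expR (p * ln a).
Proof. by move=> a0; rewrite /powR gt_eqF. Qed.

Lemma pw1 (alpha t h m : R) (x xc y : 'rV[R]_d) (fy : R) :
  0 < alpha -> (0 < d)%N -> 0 < t -> 0 < m -> `|x - xc| <= h ->
  (fy != 0 -> m <= t + `|x - y|) -> `|fy| <= 1 ->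
  (t * `|x - xc|) `^ (alpha / 2%:R) / (t + `|x - y|) `^ (alpha + d%:R) * `|fy|
   <= ((t * h) `^ (alpha / 2%:R) * m `^ (- (alpha / 2%:R))) *
      \prod_(c < d) (t + `|y 0 c - x 0 c|) `^ (- (1 + alpha / (2%:R * d%:R))).
Proof.
move=> a0 d0 t0 m0 xh hm f1.
have rhs0 : 0 <= ((t * h) `^ (alpha / 2%:R) * m `^ (- (alpha / 2%:R))) *
      \prod_(c < d) (t + `|y 0 c - x 0 c|) `^ (- (1 + alpha / (2%:R * d%:R))).
  by apply: mulr_ge0; [apply: mulr_ge0; exact: powR_ge0 | apply: prodr_ge0 => c _; exact: powR_ge0].
have [->|fy0] := eqVneq fy 0; first by rewrite normr0 mulr0.
have hm' := hm fy0.
set N := `|x - y|.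
have N0 : 0 <= N by exact: normr_ge0.
have T0 : 0 < t + N by apply: lt_le_trans t0 _; rewrite lerDl.
have A0 : 0 <= (t * `|x - xc|) `^ (alpha / 2%:R) by exact: powR_ge0.
have B0 : 0 <= ((t + N) `^ (alpha + d%:R))^-1 by rewrite invr_ge0 powR_ge0.
apply: le_trans (_ : (t * `|x - xc|) `^ (alpha / 2%:R) / (t + N) `^ (alpha + d%:R) <= _).
  by rewrite ler_piMr // mulr_ge0.
rewrite -mulrA; apply: ler_pM => //.
  have h0 : 0 <= h by exact: le_trans (normr_ge0 _) xh.
  apply: ge0_ler_powR; rewrite ?nnegrE ?mulr_ge0 ?divr_ge0 ?(ltW a0) ?ler_pM2l ?(ltW t0) //.
set beta := 1 + alpha / (2%:R * d%:R).
have dn0 : (d%:R : R) != 0 by rewrite pnatr_eq0 -lt0n.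
have bd : beta * d%:R = d%:R + alpha / 2%:R by rewrite /beta; field.
have uc c : 0 < t + `|y 0 c - x 0 c| by apply: lt_le_trans t0 _; rewrite lerDl.
have ucN c : ln (t + `|y 0 c - x 0 c|) <= ln (t + N).
  rewrite ler_ln ?posrE // lerD2l distrC.
  by have := @coord_le_norm R d (x - y) c; rewrite !mxE.
rewrite powRE // -expRN powRE //.
under eq_bigr do rewrite powRE //.
rewrite -expR_sum -expRD ler_expR.
have ln_m : ln m <= ln (t + N) by rewrite ler_ln ?posrE.
have hs : \sum_(c < d) - beta * ln (t + `|y 0 c - x 0 c|) >= \sum_(c < d) - beta * ln (t + N).
  apply: ler_sum => c _; rewrite !mulNr lerN2 ler_pM2l //.
  by rewrite /beta ltr_wpDr // divr_ge0 ?(ltW a0).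
rewrite sumr_const card_ord in hs.
apply: le_trans (lerD (lexx _) hs).
have -> : (- beta * ln (t + N)) *+ d = - (beta * d%:R) * ln (t + N) by rewrite -mulr_natr; ring.
rewrite bd.
have : - (alpha / 2%:R) * ln (t + N) <= - (alpha / 2%:R) * ln m.
  by rewrite !mulNr lerN2 ler_pM2l // divr_gt0 // ltr0n.
lra.
Qed.

Lemma pw2 (alpha t h : R) (x xc y : 'rV[R]_d) (fy : R) (ind : 'I_d -> R) :
  0 < alpha -> 0 < t -> `|x - xc| <= h ->
  (forall c, 0 <= ind c) -> (fy != 0 -> forall c, ind c = 1) -> `|fy| <= 1 ->
  (t * `|x - xc|) `^ (alpha / 2%:R) / (t + `|x - y|) `^ (alpha + d%:R) * `|fy|
   <= ((t * h) `^ (alpha / 2%:R) * t `^ (- (alpha + d%:R))) * \prod_(c < d) ind c.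
Proof.
move=> a0 t0 xh ind0 hind f1.
have rhs0 : 0 <= ((t * h) `^ (alpha / 2%:R) * t `^ (- (alpha + d%:R))) * \prod_(c < d) ind c.
  by apply: mulr_ge0; [apply: mulr_ge0; exact: powR_ge0 | apply: prodr_ge0 => c _].
have [->|fy0] := eqVneq fy 0; first by rewrite normr0 mulr0.
rewrite big1 ?mulr1; last by move=> c _; exact: hind.
set N := `|x - y|.
have N0 : 0 <= N by exact: normr_ge0.
have T0 : 0 < t + N by apply: lt_le_trans t0 _; rewrite lerDl.
have A0 : 0 <= (t * `|x - xc|) `^ (alpha / 2%:R) by exact: powR_ge0.
have B0 : 0 <= ((t + N) `^ (alpha + d%:R))^-1 by rewrite invr_ge0 powR_ge0.
apply: le_trans (_ : (t * `|x - xc|) `^ (alpha / 2%:R) / (t + N) `^ (alpha + d%:R) <= _).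
  by rewrite ler_piMr // mulr_ge0.
apply: ler_pM => //.
  have h0 : 0 <= h by exact: le_trans (normr_ge0 _) xh.
  apply: ge0_ler_powR; rewrite ?nnegrE ?mulr_ge0 ?divr_ge0 ?(ltW a0) ?ler_pM2l ?(ltW t0) //.
rewrite !powRE // -expRN ler_expR !mulNr lerN2 ler_pM2l ?ler_ln ?posrE ?lerDl //.
by apply: ltr_wpDr => //; exact: ler0n.
Qed.

Lemma int1 (alpha t h m : R) (x xc : 'rV[R]_d) (f : 'rV[R]_d -> R) :
  0 < alpha -> (0 < d)%N -> 0 < t -> 0 < m -> `|x - xc| <= h ->
  (forall y, f y != 0 -> m <= t + `|x - y|) -> (forall y, `|f y| <= 1) ->
  (int_Rd R d (fun y => ((t * `|x - xc|) `^ (alpha / 2%:R) / (t + `|x - y|) `^ (alpha + d%:R) * `|f y|)%:E)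
   <= (((t * h) `^ (alpha / 2%:R) * m `^ (- (alpha / 2%:R))) *
       ((2 / (1 + alpha / (2%:R * d%:R) - 1)) * t `^ (1 - (1 + alpha / (2%:R * d%:R)))) ^+ d)%:E)%E.
Proof.
move=> a0 d0 t0 m0 xh hm f1.
set beta := 1 + alpha / (2%:R * d%:R).
have b1 : 1 < beta by rewrite /beta ltrDl divr_gt0 // mulr_gt0 // ltr0n.
apply: le_trans (@int_Rd_le R d _ (fun y => (((t * h) `^ (alpha / 2%:R) * m `^ (- (alpha / 2%:R))) *
      \prod_(c < d) (fun s => (t + `|s - x 0 c|) `^ (- beta)) (y 0 c))%:E) _ _) _.
- move=> y; rewrite lee_fin; apply: mulr_ge0 => //; apply: mulr_ge0; first exact: powR_ge0.
  by rewrite invr_ge0 powR_ge0.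
- by move=> y; rewrite lee_fin; apply: pw1 => //; exact: hm.
rewrite (@int_Rd_prod R d (fun c s => (t + `|s - x 0 c|) `^ (- beta))) //; last 3 first.
- by apply: mulr_ge0; exact: powR_ge0.
- by move=> c s; exact: powR_ge0.
- by move=> c; apply: continuous_measurable_fun; exact: kern_cont.
under eq_bigr do rewrite int_kernel //.
by rewrite prodEFin prodr_const card_ord -EFinM.
Qed.

Lemma indic_le1 (T : Type) (A : set T) (y : T) : `|(\1_A y : R)| <= 1.
Proof. by rewrite indicE; case: (y \in A); rewrite ?normr1 ?normr0. Qed.

Lemma int2 (alpha t h q : R) (x xc : 'rV[R]_d) (a : 'I_d -> R) (A : set 'rV[R]_d) :
  0 < alpha -> 0 < t -> 0 <= q -> `|x - xc| <= h ->
  (forall y, A y -> forall c, a c <= y 0 c < a c + q) ->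
  (int_Rd R d (fun y => ((t * `|x - xc|) `^ (alpha / 2%:R) / (t + `|x - y|) `^ (alpha + d%:R) * `|(\1_A y : R)|)%:E)
   <= (((t * h) `^ (alpha / 2%:R) * t `^ (- (alpha + d%:R))) * q ^+ d)%:E)%E.
Proof.
move=> a0 t0 q0 xh hA.
apply: le_trans (@int_Rd_le R d _ (fun y => (((t * h) `^ (alpha / 2%:R) * t `^ (- (alpha + d%:R))) *
      \prod_(c < d) (fun s => (\1_(`[a c, a c + q[ : set R) s : R)) (y 0 c))%:E) _ _) _.
- move=> y; rewrite lee_fin; apply: mulr_ge0 => //; apply: mulr_ge0; first exact: powR_ge0.
  by rewrite invr_ge0 powR_ge0.
- move=> y; rewrite lee_fin; apply: pw2 => //; last exact: indic_le1.
  rewrite indicE pnatr_eq0 eqb0 negbK => /set_mem yA c.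
  by rewrite indicE mem_set //= in_itv /= hA.
rewrite (@int_Rd_prod R d (fun c s => (\1_(`[a c, a c + q[ : set R) s : R))) //; last 2 first.
- by apply: mulr_ge0; exact: powR_ge0.
- by move=> c; exact: measurable_indic.
under eq_bigr do rewrite int_indic_itv ?lerDl // (addrC (a _)) addrK.
by rewrite prodEFin prodr_const card_ord -EFinM.
Qed.
End D.
Section E.
Variable R : realType.

Lemma powRE' (a p : R) : 0 < a -> a `^ p = expR (p * ln a).
Proof. by move=> a0; rewrite /powR gt_eqF. Qed.

Lemma lhs1E (alpha t h m : R) (d : nat) : (0 < d)%N -> 0 < t -> 0 < h -> 0 < m ->
  (t * h) `^ (alpha / 2%:R) * m `^ (- (alpha / 2%:R)) *
  ((2 / (1 + alpha / (2%:R * d%:R) - 1)) * t `^ (1 - (1 + alpha / (2%:R * d%:R)))) ^+ d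
  = (2 / (1 + alpha / (2%:R * d%:R) - 1)) ^+ d * expR (alpha / 2%:R * ln h - alpha / 2%:R * ln m).
Proof.
move=> d0 t0 h0 m0.
have dn0 : (d%:R : R) != 0 by rewrite pnatr_eq0 -lt0n.
rewrite exprMn mulrC -!mulrA; congr (_ * _).
rewrite !powRE' ?mulr_gt0 // -expRM_natl -!expRD lnM ?posrE //.
by congr expR; field.
Qed.

Lemma rhsE (p h M : R) : 0 < h -> 0 < M -> (h / M) `^ p = expR (p * (ln h - ln M)).
Proof. by move=> h0 M0; rewrite powRE' ?divr_gt0 // ln_div ?posrE. Qed.

Lemma lhs2E (alpha t h q : R) (d : nat) : 0 < t -> 0 < h -> 0 < q ->
  (t * h) `^ (alpha / 2%:R) * t `^ (- (alpha + d%:R)) * q ^+ d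
  = expR (alpha / 2%:R * (ln t + ln h) - (alpha + d%:R) * ln t + d%:R * ln q).
Proof.
move=> t0 h0 q0.
rewrite !powRE' ?mulr_gt0 // lnM ?posrE // -[q in q ^+ d]lnK ?posrE // -expRM_natl -!expRD.
by congr expR; ring.
Qed.

Lemma fin1A (alpha t h L cd C2 : R) (r : nat) : 0 < alpha -> 0 < cd -> 0 <= C2 ->
  0 < h -> h <= L -> L / 2%:R < t ->
  cd * expR (alpha / 2%:R * ln h - alpha / 2%:R * ln t) <=
  (cd * expR ((alpha / 2%:R + alpha / 4%:R * r%:R) * ln 2%:R) + C2) *
    expR (alpha / 4%:R * (ln h - ln (2%:R ^+ r * L))).
Proof.
move=> a0 cd0 C20 h0 hL Lt.
have L0 : 0 < L by apply: lt_le_trans hL.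
have t0 : 0 < t by apply: lt_trans Lt; rewrite divr_gt0 // ltr0n.
apply: le_trans (_ : _ <= (cd * expR ((alpha / 2%:R + alpha / 4%:R * r%:R) * ln 2%:R)) *
    expR (alpha / 4%:R * (ln h - ln (2%:R ^+ r * L)))) _; last first.
  by rewrite ler_wpM2r ?expR_ge0 // lerDl.
rewrite -(mulrA cd) -expRD ler_pM2l // ler_expR.
rewrite lnM ?posrE ?exprn_gt0 ?ltr0n // lnXn ?ltr0n // -[ln 2%:R *+ r]mulr_natr.
have lhL : ln h <= ln L by rewrite ler_ln ?posrE.
have ltL : ln L - ln 2%:R <= ln t.
  by rewrite -ln_div ?posrE ?ltr0n // ler_ln ?posrE ?divr_gt0 ?ltr0n // ltW.
have H1 : 0 <= alpha * (ln L - ln h) by apply: mulr_ge0; [exact: ltW | lra].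
have H2 : 0 <= alpha * (ln t - ln L + ln 2%:R) by apply: mulr_ge0; [exact: ltW | lra].
nra.
Qed.

Lemma fin1B (alpha h q g cd C2 : R) (r : nat) : 0 < alpha -> 0 < cd -> 0 <= C2 ->
  0 < h -> h <= q -> 0 <= g <= 2^-1 ->
  cd * expR (alpha / 2%:R * ln h - alpha / 2%:R * ln (h `^ g * q `^ (1 - g))) <=
  (cd * expR ((alpha / 2%:R + alpha / 4%:R * r%:R) * ln 2%:R) + C2) *
    expR (alpha / 4%:R * (ln h - ln q)).
Proof.
move=> a0 cd0 C20 h0 hq /andP [g0 g1].
have q0 : 0 < q by apply: lt_le_trans hq.
apply: le_trans (_ : _ <= (cd * expR ((alpha / 2%:R + alpha / 4%:R * r%:R) * ln 2%:R)) *
    expR (alpha / 4%:R * (ln h - ln q))) _; last first.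
  by rewrite ler_wpM2r ?expR_ge0 // lerDl.
rewrite -(mulrA cd) -expRD ler_pM2l // ler_expR.
rewrite lnM ?posrE ?powR_gt0 // !ln_powR.
have lhq : ln h <= ln q by rewrite ler_ln ?posrE.
have l2 : 0 < ln (2%:R : R) by rewrite ln_gt0 // ltr1n.
have H1 : 0 <= (alpha / 2%:R + alpha / 4%:R * r%:R) * ln 2%:R.
  by apply: mulr_ge0; [apply: addr_ge0; [|apply: mulr_ge0]; rewrite ?divr_ge0 ?ler0n ?(ltW a0) | exact: ltW].
have H2 : 0 <= (alpha * (1 - 2%:R * g)) * (ln q - ln h).
  by apply: mulr_ge0; [apply: mulr_ge0; [exact: ltW | lra] | lra].
nra.
Qed.

Lemma fin2 (alpha t h q L C1 : R) (d : nat) : 0 < alpha -> 0 <= C1 ->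
  0 < t -> 0 < h -> 0 < q -> 0 < L -> L / 2%:R < t ->
  expR (alpha / 2%:R * (ln t + ln h) - (alpha + d%:R) * ln t + d%:R * ln q) <=
  (C1 + expR ((alpha / 2%:R + d%:R) * ln 2%:R)) * (q ^+ d / L ^+ d) * (h / L) `^ (alpha / 2%:R).
Proof.
move=> a0 C10 t0 h0 q0 L0 Lt.
apply: le_trans (_ : _ <= expR ((alpha / 2%:R + d%:R) * ln 2%:R) * (q ^+ d / L ^+ d) * (h / L) `^ (alpha / 2%:R)) _; last first.
  rewrite -!mulrA ler_wpM2r ?lerDr //.
  by rewrite !mulr_ge0 ?invr_ge0 ?exprn_ge0 ?powR_ge0 // ltW.
have qE : q ^+ d = expR (d%:R * ln q) by rewrite expRM_natl lnK ?posrE.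
have LE : L ^+ d = expR (d%:R * ln L) by rewrite expRM_natl lnK ?posrE.
rewrite rhsE // qE LE -expRB -!expRD ler_expR.
have ltL : ln L - ln 2%:R <= ln t.
  by rewrite -ln_div ?posrE ?ltr0n // ler_ln ?posrE ?divr_gt0 ?ltr0n // ltW.
have H : 0 <= (alpha / 2%:R + d%:R) * (ln t - ln L + ln 2%:R).
  by apply: mulr_ge0; [apply: addr_ge0; rewrite ?divr_ge0 ?ler0n ?(ltW a0) | lra].
nra.
Qed.
End E.
Theorem lemma7p4 (R : realType) (d : nat) (alpha : R) :
  (0 < d)%N -> 0 < alpha <= 1 ->
  exists2 eta : R, 0 < eta &
  forall r : nat, exists2 C : R, 0 < C &
  forall (w : grid_param d) (S' Rc Q : dcube d) (x : 'rV[R]_d) (t : R),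
    cube_set R d w S' `<=` cube_set R d w Rc ->
    good R d w (alpha / (4%:R * alpha + 4%:R * d%:R)) r S' ->
    x \in cube_set R d w S' ->
    side R d Rc / 2%:R < t < side R d Rc ->
    cube_set R d w S' `<=` cube_set R d w Q ->
    (Kop R d w alpha t S' (\1_(~` cube_set R d w Q)) x
       <= (C * (side R d S' / Num.max ((2%:R : R) ^+ r * side R d Rc) (side R d Q))
                 `^ eta)%:E)%E /\
    (Kop R d w alpha t S' (\1_(cube_set R d w Q)) x
       <= (C * (side R d Q ^+ d / side R d Rc ^+ d)
             * (side R d S' / side R d Rc) `^ (alpha / 2%:R))%:E)%E.
Proof.
move=> d0 /andP [a0 a1].
exists (alpha / 4%:R); first by rewrite divr_gt0 // ltr0n.
move=> r.
have dn0 : (0 : R) < d%:R by rewrite ltr0n.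
have cd0 : 0 < (2 / (1 + alpha / (2%:R * d%:R) - 1)) ^+ d.
  by rewrite exprn_gt0 // addrC addKr divr_gt0 // ?divr_gt0 ?mulr_gt0 // ltr0n.
exists ((2 / (1 + alpha / (2%:R * d%:R) - 1)) ^+ d * expR ((alpha / 2%:R + alpha / 4%:R * r%:R) * ln 2%:R)
        + expR ((alpha / 2%:R + d%:R) * ln 2%:R)).
  by rewrite addr_gt0 // ?mulr_gt0 ?expR_gt0.
move=> w S' Rc Q x t SR good xS /andP [Lt tL] SQ.
have h0 := side_gt0 R d S'.
have L0 := side_gt0 R d Rc.
have q0 := side_gt0 R d Q.
have xS' : cube_set R d w S' x := set_mem xS.
have t0 : 0 < t by apply: lt_trans Lt; rewrite divr_gt0 // ltr0n.
have hL : side R d S' <= side R d Rc := @side_le R d w S' Rc x d0 xS' SR.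
have xQ := SQ _ xS'.
have xch : `|x - centre R d w S'| <= side R d S'.
  apply: (@norm_le R d); first exact: ltW.
  move=> j.
  have ce : centre R d w S' 0 j = side R d S' * ((dpos d S' j)%:~R + 2^-1) + dshift R d w (dgen d S') 0 j.
    by rewrite mxE.
  rewrite [(x - _) 0 j]mxE [X in x 0 j + X]mxE ce.
  have /(@cube_setE R d w S' x)/(_ j)/andP[] := xS'; rewrite /lo => l1 l2.
  rewrite ler_norml; apply/andP; split; lra.
split.
- rewrite /Kop.
  case: (leP (side R d Q) (2%:R ^+ r * side R d Rc)) => hq.
  + apply: le_trans (@int1 R d alpha t _ t x _ _ a0 d0 t0 t0 xch _ _) _.
    * by move=> y _; rewrite lerDl.
    * by move=> y; exact: indic_le1.
    rewrite lee_fin lhs1E // rhsE //; last by rewrite mulr_gt0 // exprn_gt0 // ltr0n.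
    apply: fin1A => //; exact: expR_ge0.
  + set g := alpha / (4%:R * alpha + 4%:R * d%:R).
    have g0 : 0 <= g by rewrite divr_ge0 // ?addr_ge0 ?mulr_ge0 // ltW.
    have g1 : g <= 2^-1.
      rewrite /g ler_pdivrMr ?addr_gt0 ?mulr_gt0 ?ltr0n //.
      have : 0 <= d%:R * (4%:R : R) by rewrite mulr_ge0 ?ler0n.
      lra.
    have r1 : 1 <= (2%:R : R) ^+ r by rewrite exprn_ege1 // ler1n.
    have Lr : side R d Rc <= 2%:R ^+ r * side R d Rc by rewrite ler_peMl // ltW.
    have hq' : side R d S' <= side R d Q.
      by apply: le_trans hL (le_trans Lr (ltW hq)).
    have m0 : 0 < side R d S' `^ g * side R d Q `^ (1 - g) by rewrite mulr_gt0 // powR_gt0.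
    apply: le_trans (@int1 R d alpha t _ _ x _ _ a0 d0 t0 m0 xch _ _) _.
    * move=> y; rewrite indicE pnatr_eq0 eqb0 negbK => /set_mem nQy.
      have [z [bz dz]] := @bdry_near R d w Q x y xQ nQy.
      have hg : 2%:R ^+ r * side R d S' <= side R d Q.
        apply: le_trans (ltW hq); rewrite ler_pM2l // exprn_gt0 // ltr0n.
      have := good Q hg.
      move=> /lt_le_trans /(_ (ereal_inf_lbound _)).
      have : [set (`|x0 - y0|)%:E | x0 in cube_set R d w S' & y0 in boundary R d (cube_set R d w Q)] (`|x - z|)%:E.
        by exists x => //; exists z.
      move=> /[swap] /[apply]; rewrite lte_fin => hlt.
      apply: ltW; apply: lt_le_trans hlt _; apply: le_trans dz _; rewrite lerDr; exact: ltW.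
    * by move=> y; exact: indic_le1.
    rewrite lee_fin lhs1E //.
    rewrite rhsE //.
    by apply: fin1B => //; apply/andP.
- rewrite /Kop.
  apply: le_trans (@int2 R d alpha t _ (side R d Q) x _ (lo R d w Q) _ a0 t0 (ltW q0) xch _) _.
    by move=> y /(@cube_setE R d w Q y).
  rewrite lee_fin lhs2E //.
  apply: fin2 => //.
  by rewrite mulr_ge0 ?expR_ge0 // ltW.
Qed.
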